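(* Let $p\in(0,1)$ and $c\in(0,1)$, and set $\lambda_i=c^{i-1}$ for $i\ge1$. Let $r_1,r_2,\dots$ be $\{0,1\}$-valued random variables with $\Pr(r_1=1)=p$ and, for every $n\ge2$, $\Pr(r_n=1\mid r_1,\dots,r_{n-1})=\lambda_n p+(1-\lambda_n)\bar p_{n-1}$, where $\bar p_m=\frac1m\sum_{i=1}^m r_i$. Then \[\lim_{n\to\infty}\mathbb{E}\big[|\bar p_n-p|\big]\ge 2p(1-p)\exp\big(-c\,\phi(c,1,2)-c^2\,\phi(c^2,2,2)\big),\] where $\phi(z,s,a)=\sum_{k=0}^\infty\frac{z^k}{(a+k)^s}$ is the Lerch transcendent.
   Context: For $|z|<1$ the series defining $\phi(z,s,a)$ converges. *)

(* Defs.v *)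
From HB Require Import structures.
From mathcomp Require Import all_boot all_order all_algebra.
From mathcomp Require Import all_classical all_reals all_analysis.
Set Implicit Arguments. Unset Strict Implicit. Unset Printing Implicit Defensive.
Import Order.TTheory GRing.Theory Num.Theory.
Import numFieldNormedType.Exports.
Local Open Scope classical_set_scope.
Local Open Scope ring_scope.

(* Lerch transcendent phi(z,s,a) = sum_{k>=0} z^k/(a+k)^s, for natural s
   (only s = 1, 2 are needed); the series converges for |z| < 1. *)
Definition lerch (R : realType) (z : R) (s : nat) (a : R) : R :=
  limn (fun N : nat => \sum_(0 <= k < N) z ^+ k / (a + k%:R) ^+ s).

Definition lam (R : realType) (c : R) (i : nat) : R := c ^+ i.-1.

Definition pbar (R : realType) (T : Type) (r : nat -> T -> R) (m : nat) (w : T) : R :=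
  m%:R^-1 * \sum_(1 <= i < m.+1) r i w.

Definition pbar_hist (R : realType) (b : nat -> bool) (m : nat) : R :=
  m%:R^-1 * \sum_(1 <= i < m.+1) (b i)%:R.

Definition hist_event (R : realType) (T : Type) (r : nat -> T -> R)
  (m : nat) (b : nat -> bool) : set T :=
  [set w | forall i, (1 <= i <= m)%N -> r i w = (b i)%:R].

(* Main.v *)
Require Import Defs.
From HB Require Import structures.
From mathcomp Require Import all_boot all_order all_algebra.
From mathcomp Require Import all_classical all_reals all_analysis.
From mathcomp Require Import ring lra measurable_realfun.
Import Order.TTheory GRing.Theory Num.Theory.
Import numFieldNormedType.Exports.
Local Open Scope classical_set_scope.
Local Open Scope ring_scope.


Section Analysis.
Context {R : realType}.

Lemma key_ineq (x : R) : 0 <= x -> x <= 1/2 -> expR (- (x + x ^+ 2)) <= 1 - x.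
Proof.
move=> x0 x2.
set y := x + x ^+ 2.
have y0 : 0 <= y by rewrite /y; apply: addr_ge0 => //; exact: sqr_ge0.
set u := y / 6.
have u0 : 0 <= u by rewrite /u; apply: divr_ge0.
have hE : (1 + u) ^+ 6 <= expR y.
  have -> : y = 6%:R * u by rewrite /u mulrC divfK // pnatr_eq0.
  rewrite expRM_natl; apply: lerXn2r.
  - by rewrite nnegrE; apply: addr_ge0.
  - by rewrite nnegrE; exact: expR_ge0.
  - exact: expR_ge1Dx.
have hT : 1 + y + 5/12 * y^+2 + 5/54 * y^+3 <= (1 + u) ^+ 6.
  have h4 : 0 <= u ^+ 4 by apply: exprn_ge0.
  have h5 : 0 <= u ^+ 5 by apply: exprn_ge0.
  have h6 : 0 <= u ^+ 6 by apply: exprn_ge0.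
  have -> : y = 6 * u by rewrite /u mulrC divfK // pnatr_eq0.
  have -> : (1 + u) ^+ 6 = 1 + 6 * u + 15 * u^+2 + 20 * u^+3 + 15 * u^+4 + 6 * u^+5 + u^+6.
    by rewrite !exprS expr0; ring.
  have -> : 1 + 6 * u + 5 / 12 * (6 * u) ^+ 2 + 5 / 54 * (6 * u) ^+ 3 =
            1 + 6 * u + 15 * u^+2 + 20 * u^+3 by rewrite !exprS expr0; field.
  lra.
have hQ : 1 <= (1 - x) * (1 + y + 5/12 * y^+2 + 5/54 * y^+3).
  have e : (1 - x) * (1 + y + 5/12 * y^+2 + 5/54 * y^+3) - 1 =
     x^+2 * (5/12 - 53/108 * x - 25/108 * x^+2 - 5/12 * x^+3 - 5/27 * x^+4 - 5/54 * x^+5).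
    by rewrite /y !exprS expr0; field.
  have q0 : 0 <= 5/12 - 53/108 * x - 25/108 * x^+2 - 5/12 * x^+3 - 5/27 * x^+4 - 5/54 * x^+5.
    have b2 : x ^+ 2 <= 1/4 by rewrite expr2; nra.
    have b3 : x ^+ 3 <= 1/8 by rewrite exprS; nra.
    have b4 : x ^+ 4 <= 1/16 by rewrite exprS; nra.
    have b5 : x ^+ 5 <= 1/32 by rewrite exprS; nra.
    lra.
  have : 0 <= x ^+ 2 * (5/12 - 53/108 * x - 25/108 * x^+2 - 5/12 * x^+3 - 5/27 * x^+4 - 5/54 * x^+5).
    by apply: mulr_ge0 => //; exact: sqr_ge0.
  rewrite -e; lra.
have ey : 0 < expR y := expR_gt0 y.
rewrite expRN.
have h1 : 1 <= (1 - x) * expR y.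
  apply: (le_trans hQ); apply: ler_wpM2l; first lra.
  exact: le_trans hT hE.
rewrite -[_^-1]mul1r ler_pdivrMr //; lra.
Qed.


Definition lps (z : R) (s : nat) (N : nat) : R :=
  \sum_(0 <= k < N) z ^+ k / (2 + k%:R) ^+ s.

Lemma lps_term_ge0 (z : R) s k : 0 <= z -> 0 <= z ^+ k / (2 + k%:R) ^+ s.
Proof. by move=> z0; apply: divr_ge0; [exact: exprn_ge0|apply: exprn_ge0; apply: addr_ge0]. Qed.

Lemma lps_nd (z : R) s : 0 <= z -> nondecreasing_seq (lps z s).
Proof.
move=> z0; apply/nondecreasing_seqP => n.
by rewrite /lps big_nat_recr //= lerDl; apply: lps_term_ge0.
Qed.

Lemma lps_ub (z : R) s N : 0 <= z < 1 -> lps z s N <= (1 - z)^-1.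
Proof.
case/andP=> z0 z1.
have h1 : lps z s N <= \sum_(0 <= k < N) z ^+ k.
  apply: ler_sum => k _.
  rewrite ler_pdivrMr; last by apply: exprn_gt0; apply: ltr_wpDr => //; rewrite ler0n.
  apply: ler_peMr; first exact: exprn_ge0.
  apply: exprn_ege1; have : (0:R) <= k%:R by rewrite ler0n.
  lra.
apply: (le_trans h1).
have e : \sum_(0 <= k < N) z ^+ k = (1 - z ^+ N) / (1 - z).
  rewrite big_mkord; apply: (@mulIf _ (1 - z)); first by rewrite subr_eq0 gt_eqF.
  rewrite divfK; last by rewrite subr_eq0 gt_eqF.
  have := subrX1 z N => h.
  have -> : 1 - z ^+ N = - (z ^+ N - 1) by rewrite opprB.
  by rewrite h -mulNr opprB mulrC.
rewrite e ler_pdivrMr ?subr_gt0 // mulVf ?subr_eq0 ?gt_eqF //.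
by rewrite lerBlDr lerDl; apply: exprn_ge0.
Qed.

Lemma lps_cvg (z : R) s : 0 <= z < 1 -> lps z s @ \oo --> lerch z s 2.
Proof.
move=> hz.
have hc : cvgn (lps z s).
  apply: nondecreasing_is_cvgn; first by apply: lps_nd; case/andP: hz.
  by exists (1 - z)^-1 => _ [N _ <-]; apply: lps_ub.
exact: hc.
Qed.

Lemma lps_le_lerch (z : R) s N : 0 <= z < 1 -> lps z s N <= lerch z s 2.
Proof.
move=> hz; have hc := @lps_cvg z s hz.
have := @nondecreasing_cvgn_le R (lps z s) (@lps_nd z s (proj1 (andP hz))) (cvgP _ hc) N.
by rewrite (cvg_lim _ hc).
Qed.


Lemma limit_lemma (a : nat -> R) (c : R) : 0 < c < 1 -> (forall n, 0 <= a n <= 1) ->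
  (forall j, (1 - c ^+ j.+1 / (2 + j%:R)) * a j.+1 <= a j.+2) ->
  exists l, a @ \oo --> l /\
    a 1%N * expR (- (c * lerch c 1 2) - c ^+ 2 * lerch (c ^+ 2) 2 2) <= l.
Proof.
move=> /andP[c0 c1] ha hstep.
have hc : 0 <= c < 1 by rewrite ltW.
have hc2 : 0 <= c ^+ 2 < 1.
  by rewrite exprn_ge0 ?ltW //= expr2; rewrite -[1]mulr1; apply: ltr_pM => //; exact: ltW.
pose sig N := c * lps c 1 N + c ^+ 2 * lps (c ^+ 2) 2 N.
pose S := c * lerch c 1 2 + c ^+ 2 * lerch (c ^+ 2) 2 2.
have hsig : sig @ \oo --> S.
  apply: cvgD.
    exact: cvgMl_tmp (@lps_cvg c 1 hc).
  exact: cvgMl_tmp (@lps_cvg (c ^+ 2) 2 hc2).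
have sigS : forall N, sig N <= S.
  move=> N; apply: lerD; apply: ler_wpM2l.
  - exact: ltW.
  - exact: lps_le_lerch.
  - exact: exprn_ge0 (ltW c0).
  - exact: lps_le_lerch.
pose x N : R := c ^+ N.+1 / (2 + N%:R).
have sigS1 : forall N, sig N.+1 = sig N + (x N + x N ^+ 2).
  move=> N; rewrite /sig /lps !big_nat_recr //= /x.
  have d0 : (2 + N%:R : R) != 0.
    apply: lt0r_neq0; have : (0:R) <= N%:R by rewrite ler0n.
    lra.
  rewrite -exprM mulnC exprM !exprS !expr0; field.
  exact: d0.
have x0 : forall N, 0 <= x N.
  move=> N; apply: divr_ge0; first exact: exprn_ge0 (ltW c0).
  have : (0:R) <= N%:R by rewrite ler0n.
  lra.
have x2 : forall N, x N <= 1/2.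
  move=> N; have : (0:R) <= N%:R by rewrite ler0n.
  have : c ^+ N.+1 <= 1 by apply: exprn_ile1; exact: ltW.
  move=> h1 h2; rewrite /x ler_pdivrMr; lra.
pose w N := a N.+1 * expR (sig N).
have wnd : nondecreasing_seq w.
  apply/nondecreasing_seqP => N; rewrite /w sigS1 (expRD (sig N)) [expR (sig N) * _]mulrC mulrA.
  apply: ler_wpM2r; first exact: expR_ge0.
  have h1 := hstep N.
  have h2 := @key_ineq (x N) (x0 N) (x2 N).
  have h3 : expR (- (x N + x N ^+ 2)) * a N.+1 <= a N.+2.
    apply: le_trans h1; apply: ler_wpM2r; first by case/andP: (ha N.+1).
    exact: h2.
  have e : a N.+1 = (expR (- (x N + x N ^+ 2)) * a N.+1) * expR (x N + x N ^+ 2).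
    by rewrite mulrAC -expRD addNr expR0 mul1r.
  rewrite [X in X <= _]e; apply: ler_wpM2r => //; exact: expR_ge0.
have wub : has_ubound (range w).
  exists (expR S) => _ [N _ <-]; rewrite /w -[expR S]mul1r.
  apply: ler_pM; first by case/andP: (ha N.+1).
  - exact: expR_ge0.
  - by case/andP: (ha N.+1).
  - by rewrite ler_expR.
have wc : cvgn w by apply: nondecreasing_is_cvgn.
exists (limn w * expR (- S)); split.
  rewrite -cvg_shiftS /=.
  have -> : (fun n => a n.+1) = (fun N => w N * expR (- sig N)).
    by apply: funext => N; rewrite /w -mulrA -expRD addrN expR0 mulr1.
  apply: cvgM; first exact: wc.
  apply: (cvg_comp _ _ (cvgN hsig)); exact: continuous_expR.
have w0 : w 0%N = a 1%N by rewrite /w /sig /lps !big_geq // !mulr0 addr0 expR0 mulr1.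
rewrite -w0 opprD; apply: ler_wpM2r; first exact: expR_ge0.
exact: nondecreasing_cvgn_le.
Qed.

End Analysis.

Lemma alg_ineq {R : realType} (m : nat) (St pb p lam pi pi1 pi0 e1 e0 : R) :
  (0 < m)%N -> e1 = 1 -> e0 = 0 -> St = m%:R * pb ->
  pi1 = (lam * p + (1 - lam) * pb) * pi -> pi = pi1 + pi0 ->
  0 <= pi1 -> 0 <= pi0 -> 0 <= lam <= 1 ->
  (1 - lam / m.+1%:R) * (`|pb - p| * pi) <=
   `|(St + e1) / m.+1%:R - p| * pi1 + `|(St + e0) / m.+1%:R - p| * pi0.
Proof.
move=> m0 -> -> -> h1 h2 p1 p0 /andP[l0 l1].
have M : (0:R) < m.+1%:R := ltr0Sn _ _.
have Mm : (0:R) <= m%:R := ler0n _ _.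
have pi0' : pi0 = pi - pi1 by lra.
have pi_ge0 : 0 <= pi by lra.
have lm : 0 <= 1 - lam / m.+1%:R.
  rewrite subr_ge0 ler_pdivrMr // mul1r -natr1; lra.
rewrite -(ger0_norm p1) -(ger0_norm p0) -!normrM.
apply: le_trans (ler_normD _ _).
have e : ((m%:R * pb + 1) / m.+1%:R - p) * pi1 + ((m%:R * pb + 0) / m.+1%:R - p) * pi0
   = (1 - lam / m.+1%:R) * ((pb - p) * pi).
  rewrite pi0' h1 -natr1; field.
  by rewrite natr1 pnatr_eq0.
by rewrite e normrM (ger0_norm lm) normrM (ger0_norm pi_ge0).
Qed.

Section Proc.
Context d (T : measurableType d) (R : realType) (P : probability T R) (p c : R)
  (r : nat -> {RV P >-> R}).
Hypothesis h01 : forall n w, (1 <= n)%N -> r n w = 0 \/ r n w = 1.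
Hypothesis hP1 : P [set w | r 1%N w = 1] = p%:E.
Hypothesis hstep : forall (n : nat) (b : nat -> bool), (2 <= n)%N ->
     P (hist_event (fun i => r i : T -> R) n.-1 b `&` [set w | r n w = 1]) =
     ((lam c n * p + (1 - lam c n) * pbar_hist R b n.-1)%:E *
       P (hist_event (fun i => r i : T -> R) n.-1 b))%E.
Hypothesis hc : 0 < c < 1.
Hypothesis hp : 0 < p < 1.

Definition ext m (t : {ffun 'I_m -> bool}) : nat -> bool :=
  fun i => match (insub i.-1 : option 'I_m) with Some j => t j | None => false end.

Arguments ext {m} t.

Lemma ext_val m (t : {ffun 'I_m -> bool}) (j : 'I_m) : ext t j.+1 = t j.
Proof. by rewrite /ext /= valK. Qed.

Definition Ev m (t : {ffun 'I_m -> bool}) : set T :=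
  hist_event (fun i => r i : T -> R) m (ext t).

Definition tw m w : {ffun 'I_m -> bool} := [ffun j : 'I_m => r j.+1 w == 1].

Lemma r01 i w (b : bool) : (1 <= i)%N -> (r i w = b%:R) <-> (b = (r i w == 1)).
Proof.
move=> i1; have h10 : (1:R) != 0 by exact: oner_neq0.
case: (h01 _ w i1) => ->; case: b => /=; split => //.
- by move=> /esym/eqP; rewrite (negbTE h10).
- by rewrite eq_sym (negbTE h10).
- by rewrite eq_sym (negbTE h10).
- by rewrite eqxx.
- by move=> /eqP; rewrite (negbTE h10).
- by rewrite eqxx.
Qed.


Lemma Ev_iff m t w : Ev m t w <-> t = tw m w.
Proof.
split.
- move=> h; apply/ffunP => j; rewrite ffunE.
  have := h j.+1; rewrite ext_val => /(_ _)/r01; apply => //.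
  by rewrite /= ltn_ord.
- move=> -> i /andP[i1 im].
  have [j ->] : exists j : 'I_m, i = j.+1.
    by case: i i1 im => // i' _ im; exists (Ordinal im).
  by rewrite ext_val ffunE; apply/r01.
Qed.

Lemma hist_meas m b : measurable (hist_event (fun i => r i : T -> R) m b).
Proof.
have -> : hist_event (fun i => r i : T -> R) m b =
   \bigcap_i (if (1 <= i <= m)%N then (r i @^-1` [set (b i)%:R]) else setT).
  apply/seteqP; split => w /=.
  - by move=> h i _; case: ifP => // /h.
  - by move=> h i im; have := h i I; rewrite im.
apply: bigcapT_measurable => k; case: ifP => _; last exact: measurableT.
exact: measurable_funPTI (measurable_set1 _).
Qed.

Lemma Ev_meas m t : measurable (Ev m t).
Proof. exact: hist_meas. Qed.

Lemma rset_meas n x : measurable [set w | r n w = x].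
Proof. exact: measurable_funPTI (measurable_set1 _). Qed.

Lemma sum_indic_uniq (I : finType) (S : I -> set T) (cf : I -> R) w i0 :
  (forall i, S i w <-> i = i0) -> \sum_i cf i * \1_(S i) w = cf i0.
Proof.
move=> h; rewrite (bigD1 i0) //= big1 => [|i ne].
  by rewrite indicE mem_set ?mulr1 ?addr0 //; apply/h.
rewrite indicE memNset ?mulr0 //; move/h => e; move: ne; rewrite e eqxx.
done.
Qed.

Arguments sum_indic_uniq {I S cf w} i0.

Lemma E_sum (I : finType) (S : I -> set T) (cf : I -> R) :
  (forall i, measurable (S i)) -> (forall i, 0 <= cf i) ->
  ('E_P[fun w => (\sum_i cf i * \1_(S i) w)%R] = ((\sum_i cf i * fine (P (S i)))%R)%:E)%E.
Proof.
move=> mS c0; rewrite unlock.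
under eq_integral do rewrite -sumEFin.
rewrite ge0_integral_sum //.
- rewrite -sumEFin; apply: eq_bigr => i _.
  rewrite (@integralZl_indic _ _ _ _ _ measurableT (fun _ => S i)) //.
  + by rewrite integral_indic // setIT EFinM fineK //; exact: fin_num_measure.
  + by move=> /lt_geF; rewrite c0.
- move=> i; apply/measurable_EFinP; apply: measurable_funM.
    exact: measurable_cst.
  exact: measurable_indic.
- by move=> i x _; rewrite lee_fin; apply: mulr_ge0 => //; rewrite indicE ler0n.
Qed.


Definition St m (t : {ffun 'I_m -> bool}) : R := \sum_(1 <= i < m.+1) ((ext t i)%:R : R).

Arguments St {m} t.

Lemma sumr_Ev m t w : Ev m t w -> \sum_(1 <= i < m.+1) r i w = St t.
Proof.
move=> h; apply: eq_big_nat => i /andP[i1 im]; apply: h.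
by rewrite i1 -ltnS im.
Qed.

Arguments sumr_Ev {m t w}.

Lemma pbar_Ev m t w : Ev m t w ->
  pbar (fun i => r i : T -> R) m w = pbar_hist R (ext t) m.
Proof. by move=> h; rewrite /pbar /pbar_hist (sumr_Ev h). Qed.

Arguments pbar_Ev {m t w}.

Definition a m : R := \sum_(t : {ffun 'I_m -> bool})
   `|pbar_hist R (ext t) m - p| * fine (P (Ev m t)).

Lemma Ea m : ('E_P[fun w => (`|pbar (fun i => r i : T -> R) m w - p|)%R] = (a m)%:E)%E.
Proof.
have -> : (fun w => `|pbar (fun i => r i : T -> R) m w - p|) =
   (fun w => \sum_(t : {ffun 'I_m -> bool}) `|pbar_hist R (ext t) m - p| * \1_(Ev m t) w).
  apply: funext => w; rewrite (sum_indic_uniq (tw m w)); last by move=> i; apply: Ev_iff.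
  by rewrite (@pbar_Ev m (tw m w) w) //; apply/Ev_iff.
rewrite E_sum //.
all: move=> t; first [exact: Ev_meas | exact: normr_ge0].
Qed.

Lemma sumP1 m : \sum_(t : {ffun 'I_m -> bool}) fine (P (Ev m t)) = 1.
Proof.
have := @E_sum _ (Ev m) (fun _ => 1) (@Ev_meas m) (fun _ => ler01).
have -> : (fun w => \sum_(t : {ffun 'I_m -> bool}) (1:R) * \1_(Ev m t) w) = cst (1:R).
  apply: funext => w; rewrite (sum_indic_uniq (tw m w)) //.
  by move=> i; apply: Ev_iff.
move=> h0; have e := @expectation_cst _ _ _ P 1.
rewrite e in h0; have h := EFin_inj h0.
rewrite [RHS]h; apply: eq_bigr => t _; rewrite mul1r.
done.
Qed.

Definition S2 m (i : {ffun 'I_m -> bool} * bool) : set T :=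
  Ev m i.1 `&` [set w | r m.+1 w = (i.2)%:R].

Definition C2 m (i : {ffun 'I_m -> bool} * bool) : R :=
  `|(St i.1 + (i.2)%:R) / m.+1%:R - p|.

Arguments C2 {m} i.

Lemma Ea_succ m : ('E_P[fun w => (`|pbar (fun i => r i : T -> R) m.+1 w - p|)%R] =
   ((\sum_i C2 i * fine (P (S2 m i)))%R)%:E)%E.
Proof.
have -> : (fun w => `|pbar (fun i => r i : T -> R) m.+1 w - p|) =
   (fun w => \sum_i C2 i * \1_(S2 m i) w).
  apply: funext => w.
  rewrite (sum_indic_uniq (tw m w, r m.+1 w == 1)); last first.
    move=> [t e]; rewrite /S2 /=; split.
      by move=> [/Ev_iff -> /r01 ->].
    case=> -> ->; split; first exact/Ev_iff.
    by apply/r01.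
  have hE : Ev m (tw m w) w by apply/Ev_iff.
  rewrite /C2 /= /pbar big_nat_recr //= (sumr_Ev hE) mulrC.
  have he : r m.+1 w = (r m.+1 w == 1)%:R by apply/r01.
  set e := (r m.+1 w == 1) in he *.
  by rewrite he.
rewrite E_sum //.
- move=> i; apply: measurableI; [exact: Ev_meas| exact: rset_meas].
- by move=> i; exact: normr_ge0.
Qed.


Lemma fineP_ge0 A : 0 <= fine (P A).
Proof. by apply: fine_ge0; exact: measure_ge0. Qed.

Lemma split_gen n A : (1 <= n)%N -> measurable A ->
  fine (P A) = fine (P (A `&` [set w | r n w = true%:R])) +
               fine (P (A `&` [set w | r n w = false%:R])).
Proof.
move=> n1 mA.
have mX : forall e : bool, measurable (A `&` [set w | r n w = e%:R]).
  by move=> e; apply: measurableI => //; exact: rset_meas.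
have eA : A = (A `&` [set w | r n w = true%:R]) `|` (A `&` [set w | r n w = false%:R]).
  apply/seteqP; split => w /=.
  - by move=> h; case: (h01 _ w n1) => e; [right|left]; split => //; rewrite e.
  - by case=> -[].
rewrite {1}eA measureU //.
- by rewrite fineD //; apply: fin_num_measure.
- apply/seteqP; split => w //= [[_ h1] [_ h0]].
  by move: h1; rewrite h0 => /esym/eqP; rewrite oner_eq0.
Qed.


Lemma pbh01 m b : 0 <= pbar_hist R b m <= 1.
Proof.
rewrite /pbar_hist; case: m => [|m].
  by rewrite invr0 mul0r lexx ler01.
have hs0 : 0 <= \sum_(1 <= i < m.+2) ((b i)%:R : R) by apply: sumr_ge0 => i _; exact: ler0n.
have hs1 : \sum_(1 <= i < m.+2) ((b i)%:R : R) <= m.+1%:R.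
  apply: (le_trans (ler_sum _ (G := fun _ => 1) _)).
    by move=> i _; case: (b i) => /=; rewrite ?ler01 ?lexx.
  by rewrite sumr_const_nat subn1.
apply/andP; split; first by apply: mulr_ge0 => //; rewrite invr_ge0 ler0n.
by rewrite mulrC ler_pdivrMr ?ltr0Sn // mul1r.
Qed.

Lemma a_bound n : 0 <= a n <= 1.
Proof.
apply/andP; split.
  by apply: sumr_ge0 => t _; apply: mulr_ge0 => //; exact: fineP_ge0.
rewrite -(sumP1 n); apply: ler_sum => t _.
apply: ler_piMl; first exact: fineP_ge0.
have := pbh01 n (ext t); case/andP: hp => p0 p1.
rewrite ler_norml; lra.
Qed.

Lemma a_step j : (1 - c ^+ j.+1 / (2 + j%:R)) * a j.+1 <= a j.+2.
Proof.
set m := j.+1.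
have ea : a m.+1 = \sum_i C2 i * fine (P (S2 m i)).
  by apply: EFin_inj; rewrite -Ea Ea_succ.
have -> : (2 + j%:R : R) = m.+1%:R by rewrite /m -[j.+2]add2n natrD.
rewrite ea /a mulr_sumr.
rewrite (_ : \sum_(i : {ffun 'I_m -> bool} * bool) C2 i * fine (P (S2 m i)) = \sum_t \sum_e C2 (t, e) * fine (P (S2 m (t, e)))); last first.
  by rewrite pair_bigA; apply: eq_bigr => -[].
apply: ler_sum => t _; rewrite big_bool /C2 /=.
have c0 : 0 <= c by case/andP: hc => /ltW.
have c1 : c <= 1 by case/andP: hc => _ /ltW.
apply: (@alg_ineq R m (St t) (pbar_hist R (ext t) m) p (lam c m.+1)) => //.
- by rewrite /pbar_hist mulrA mulfV ?mul1r // pnatr_eq0.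
- have h := hstep m.+1 (ext t) isT.
  rewrite /S2 /Ev /=; rewrite /= in h.
  by rewrite h fineM //; apply: fin_num_measure; exact: hist_meas.
- exact: split_gen (Ev_meas m t).
- exact: fineP_ge0.
- exact: fineP_ge0.
- by rewrite /lam /= exprn_ge0 // exprn_ile1.
Qed.

Lemma a1 : a 1 = 2 * p * (1 - p).
Proof.
pose S (e : bool) := [set w | r 1 w = e%:R].
pose cf (e : bool) := `|e%:R - p|.
have : ('E_P[fun w => (`|pbar (fun i => r i : T -> R) 1 w - p|)%R] =
   ((\sum_e cf e * fine (P (S e)))%R)%:E)%E.
  have -> : (fun w => `|pbar (fun i => r i : T -> R) 1 w - p|) =
    (fun w => \sum_e cf e * \1_(S e) w).
    apply: funext => w; rewrite (sum_indic_uniq (r 1 w == 1)); last first.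
      by move=> e; rewrite /S /=; apply: r01.
    rewrite /pbar big_nat1 invr1 mul1r /cf.
    have he : r 1 w = (r 1 w == 1)%:R by apply/r01.
    set e := (r 1 w == 1) in he *.
    by rewrite he.
  rewrite E_sum //.
  - by move=> e; exact: rset_meas.
  - by move=> e; exact: normr_ge0.
rewrite Ea => h0; have -> := EFin_inj h0; rewrite big_bool /cf /S /=.
have s := @split_gen 1 setT isT measurableT.
rewrite !setTI probability_setT /= in s.
have e1 : fine (P [set w | r 1 w = true%:R]) = p by rewrite hP1.
rewrite e1 in s.
have e0 : fine (P [set w | r 1 w = false%:R]) = 1 - p by lra.
rewrite e1 e0.
case/andP: hp => p0 p1.
rewrite (ger0_norm (_ : 0 <= 1 - p)); last lra.
rewrite sub0r normrN (gtr0_norm p0); ring.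
Qed.

End Proc.

Theorem propositionA8 (d : measure_display) (T : measurableType d)
  (R : realType) (P : probability T R) (p c : R)
  (r : nat -> {RV P >-> R}) :
  0 < p < 1 -> 0 < c < 1 ->
  (forall n w, (1 <= n)%N -> r n w = 0 \/ r n w = 1) ->
  P [set w | r 1%N w = 1] = p%:E ->
  (forall (n : nat) (b : nat -> bool), (2 <= n)%N ->
     P (hist_event (fun i => r i : T -> R) n.-1 b `&` [set w | r n w = 1]) =
     ((lam c n * p + (1 - lam c n) * pbar_hist R b n.-1)%:E *
       P (hist_event (fun i => r i : T -> R) n.-1 b))%E) ->
  exists l : R,
    ('E_P[fun w => (`|pbar (fun i => r i : T -> R) n w - p|)%R] @[n --> \oo]
       --> l%:E)%E /\
    2 * p * (1 - p) *
      expR (- (c * lerch c 1 2) - c ^+ 2 * lerch (c ^+ 2) 2 2) <= l.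
Proof.
move=> hp hc h01 hP1 hstep.
have [l [hl hb]] := @limit_lemma R (a d T R P p r) c hc
   (fun n => @a_bound d T R P p r h01 hp n)
   (fun j => @a_step d T R P p c r h01 hstep hc j).
exists l; split.
  have -> : (fun n => 'E_P[fun w => (`|pbar (fun i => r i : T -> R) n w - p|)%R])%E =
            (fun n => (a d T R P p r n)%:E).
    by apply: funext => n; rewrite (@Ea d T R P p r h01).
  apply: cvg_EFin; first by apply: nearW.
  exact: hl.
by rewrite -(@a1 d T R P p r h01 hP1 hp).
Qed.
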